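(* For every $\varepsilon>0$ there exists $\eta>0$ such that the following holds for all $C\ge12/\varepsilon$. Every $(\varepsilon,C)$-rich graph $G$ on $\{0,1\}^d$ contains a fundamental interval $I$ (at some level $a<d$), a vertex $x\in\mathrm{lhs}(I)$, and a subgraph $G'$ of $G[\mathrm{rhs}(I)]$ such that $G'$ is $(\eta,\varepsilon C/24)$-rich and the larger vertex of every edge of $G'$ lies in $N^+(x)$.
   Context: For distinct $x,y\in\{0,1\}^d$, $\delta(x,y)=\min\{i:x_i\ne y_i\}$; $\{0,1\}^d$ is ordered lexicographically ($x<y$ iff $x_{\delta(x,y)}=0$). For a graph $G$ on $\{0,1\}^d$, a level-$\ell$ edge is an edge $uv$ with $\delta(u,v)=\ell$, $e_\ell(G)$ counts them, $\tau_{\ell,d}=2^{2d-\ell-1}$, a level $\ell\in[d]$ is $\alpha$-rich if $e_\ell(G)\ge\alpha\tau_{\ell,d}$, and $G$ is $(\alpha,C)$-rich if at least $C$ levels are $\alpha$-rich. For $a\in\{0,\dots,d\}$, the fundamental intervals at level $a$ are the classes of strings in $\{0,1\}^d$ agreeing in their first $a$ coordinates. For such an interval $I$ with $a<d$, $\mathrm{lhs}(I)$ (resp. $\mathrm{rhs}(I)$) is the set of strings of $I$ whose $(a+1)$-th coordinate is $0$ (resp. $1$). A graph on $\mathrm{rhs}(I)$ is regarded as a graph on $\{0,1\}^{d-a-1}$ by deleting the first $a+1$ (constant) coordinates, and richness of $G'$ is understood via this identification. $N^+(x)$ is the set of forward neighbours of $x$ in $G$, i.e. vertices $v>x$ with $xv\in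 E(G)$. *)

(* Defs.v *)
From HB Require Import structures.
From mathcomp Require Import all_boot all_order all_algebra.
From mathcomp Require Import reals.
Set Implicit Arguments. Unset Strict Implicit. Unset Printing Implicit Defensive.
Import Order.TTheory GRing.Theory Num.Theory.

(* The hypercube {0,1}^d; coordinate i : 'I_d is the (i+1)-th coordinate. *)
Definition cube (d : nat) := {ffun 'I_d -> bool}.

(* delta(x,y) = min { i : x_i <> y_i }, with 1-based indices (levels in [d]). *)
Definition delta (d : nat) (x y : cube d) : nat :=
  (find (fun i : 'I_d => x i != y i) (enum 'I_d)).+1.

Definition lexlt (d : nat) (x y : cube d) : bool :=
  [exists i : 'I_d, [forall j : 'I_d, (j < i)%N ==> (x j == y j)] && ~~ x i && y i].

Definition is_graph (d : nat) (g : rel (cube d)) : Prop :=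
  (forall x y, g x y = g y x) /\ (forall x, ~~ g x x).

(* e_l(G): number of edges uv with delta(u,v) = l (each edge counted once, u < v). *)
Definition nedges (d : nat) (g : rel (cube d)) (l : nat) : nat :=
  #|[set p : cube d * cube d | [&& g p.1 p.2, lexlt p.1 p.2 & delta p.1 p.2 == l]]|.

Definition tau (l d : nat) : nat := 2 ^ (2 * d - l - 1).

Section Rich.
Variable R : realType.
Local Open Scope ring_scope.

Definition rich_level (alpha : R) (d : nat) (g : rel (cube d)) (l : nat) : bool :=
  alpha * (tau l d)%:R <= (nedges g l)%:R.

Definition rich (alpha C : R) (d : nat) (g : rel (cube d)) : Prop :=
  C <= #|[set l : 'I_d | rich_level alpha g l.+1]|%:R.
End Rich.

(* Embedding of {0,1}^(d-a-1) onto rhs(I), where I is the fundamental interval at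
   level a containing x: first a coordinates copied from x, (a+1)-th coordinate 1,
   remaining coordinates from y. *)
Definition rhs_emb (d a : nat) (x : cube d) (y : cube (d - a - 1)) : cube d :=
  [ffun i : 'I_d =>
     if (i < a)%N then x i
     else if (i == a :> nat) then true
     else odflt false (omap y (insub (i - a - 1)%N))].

Definition fwd_nbr (d : nat) (g : rel (cube d)) (x v : cube d) : bool :=
  lexlt x v && g x v.
Arguments rhs_emb {d} a x y.

(* Main.v *)
Require Import Defs.
From HB Require Import structures.
From mathcomp Require Import all_boot all_order all_algebra.
From mathcomp Require Import reals.
From mathcomp Require Import zify ring lra.
Import Order.TTheory GRing.Theory Num.Theory.
Set Implicit Arguments. Unset Strict Implicit. Unset Printing Implicit Defensive.

Definition lvl (d : nat) (j : 'I_d) (u v : cube d) : bool :=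
  [forall k : 'I_d, (k < j)%N ==> (u k == v k)] && ~~ u j && v j.

Lemma deltaE d (j : 'I_d) (u v : cube d) :
  (forall k : 'I_d, (k < j)%N -> u k = v k) -> u j != v j -> delta u v = j.+1.
Proof.
move=> Hp Hj; rewrite /delta; congr S.
set P := (fun i : 'I_d => u i != v i).
have hasP : has P (enum 'I_d) by apply/hasP; exists j; rewrite ?mem_enum.
have fs : (find P (enum 'I_d) < d)%N.
  by have := has_find P (enum (ordinal d)); rewrite hasP size_enum_ord => <-.
case: (ltngtP (find P (enum 'I_d)) j) => // H.
- have := nth_find j hasP.
  have -> : nth j (enum 'I_d) (find P (enum 'I_d)) = Ordinal fs.
    by apply: val_inj; rewrite /= nth_enum_ord.
  by rewrite /P (Hp (Ordinal fs) H) eqxx.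
- have := before_find j H.
  have -> : nth j (enum 'I_d) j = j by apply: val_inj; rewrite /= nth_enum_ord.
  by rewrite /P Hj.
Qed.

Lemma lexltP d (u v : cube d) :
  lexlt u v -> exists j : 'I_d, lvl j u v.
Proof.
case/existsP=> j /andP[/andP[H1 H2] H3]; exists j.
by rewrite /lvl H1 H2 H3.
Qed.

Lemma lvl_delta d (j : 'I_d) (u v : cube d) : lvl j u v -> delta u v = j.+1.
Proof.
case/andP=> [/andP[/forallP H1 H2] H3]; apply: deltaE.
  by move=> k hk; apply/eqP; exact: (implyP (H1 k) hk).
by apply/negP => /eqP E; move: H2; rewrite E H3.
Qed.

Lemma lvl_lexlt d (j : 'I_d) (u v : cube d) : lvl j u v -> lexlt u v.
Proof.
case/andP=> [/andP[H1 H2] H3]; apply/existsP; exists j; by rewrite H1 H2 H3.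
Qed.

Lemma lvl_uniq d (i j : 'I_d) (u v : cube d) : lvl i u v -> lvl j u v -> i = j.
Proof.
move=> Hi Hj; apply: val_inj; apply: succn_inj.
by rewrite -(lvl_delta Hi) -(lvl_delta Hj).
Qed.

Lemma lvlE d (j : 'I_d) (u v : cube d) :
  lexlt u v && (delta u v == j.+1) = lvl j u v.
Proof.
apply/idP/idP.
- case/andP=> /lexltP [i Hi] /eqP E.
  have : i = j by apply: val_inj; apply: succn_inj; rewrite -(lvl_delta Hi).
  by move=> <-.
- by move=> H; rewrite (lvl_lexlt H) (lvl_delta H) eqxx.
Qed.

Lemma lexlt_asym d (u v : cube d) : lexlt u v -> lexlt v u -> False.
Proof.
move=> /lexltP [i /andP[/andP[/forallP H1 H2] H3]].
move=> /lexltP [j /andP[/andP[/forallP K1 K2] K3]].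
case: (ltngtP i j) => h.
- by move: (implyP (K1 i) h) => /eqP E; move: H2; rewrite -E H3.
- by move: (implyP (H1 j) h) => /eqP E; move: K2; rewrite -E K3.
- have e : i = j by apply: val_inj.
  by subst; move: H2; rewrite K3.
Qed.

Lemma sh_proof d (i : nat) (k : 'I_(d - i - 1)) : (k + i.+1 < d)%N.
Proof. have := ltn_ord k; lia. Qed.

Definition sh d (i : nat) (k : 'I_(d - i - 1)) : 'I_d := Ordinal (sh_proof k).

Definition proj d (i : nat) (y : cube d) : cube (d - i - 1) :=
  [ffun k => y (sh k)].

Lemma shP d (i t : 'I_d) : (i < t)%N -> {k : 'I_(d - i - 1) | sh k = t}.
Proof.
move=> h.
have hk : (t - i - 1 < d - i - 1)%N by have := ltn_ord t; lia.
exists (Ordinal hk); apply: val_inj => /=; lia.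
Qed.

Lemma emb_sh d (i : nat) (x : cube d) (y : cube (d - i - 1)) k :
  rhs_emb i x y (sh k) = y k.
Proof.
rewrite ffunE /=.
have -> : (k + i.+1 < i)%N = false by lia.
have -> : (k + i.+1 == i) = false by lia.
have -> : (k + i.+1 - i - 1)%N = k by lia.
by rewrite valK.
Qed.

Lemma emb_proj d (i : 'I_d) (x v : cube d) :
  (forall t : 'I_d, (t < i)%N -> v t = x t) -> v i ->
  rhs_emb i x (proj i v) = v.
Proof.
move=> H1 H2; apply/ffunP => t; rewrite ffunE.
case: (ltngtP t i) => h.
- by rewrite H1.
- have [k <-] := shP h.
  have -> : (sh k - i - 1)%N = k by rewrite /=; lia.
  by rewrite valK /= ffunE.
- have -> : t = i by apply: val_inj.
  by rewrite ?eqxx H2.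
Qed.

Lemma proj_inj d (j : 'I_d) (v u u' : cube d) :
  lvl j u v -> lvl j u' v -> proj j u = proj j u' -> u = u'.
Proof.
move=> /andP[/andP[/forallP H1 H2] H3] /andP[/andP[/forallP K1 K2] K3] E.
apply/ffunP => t; case: (ltngtP t j) => h.
- by rewrite (eqP (implyP (H1 t) h)) (eqP (implyP (K1 t) h)).
- have [k <-] := shP h.
  by have := congr1 (fun f : cube (d - j - 1) => f k) E; rewrite !ffunE.
- have -> : t = j by apply: val_inj.
  by move: H2 K2; case: (u j); case: (u' j).
Qed.

Lemma lvl_proj d (i : nat) (j : 'I_(d - i - 1)) (u v : cube d) :
  lvl (sh j) u v -> lvl j (proj i u) (proj i v).
Proof.
move=> /andP[/andP[/forallP H1 H2] H3].
rewrite /lvl; apply/andP; split; first apply/andP; first split.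
- apply/forallP => k; apply/implyP => hk.
  rewrite !ffunE; apply: (implyP (H1 (sh k))); rewrite /=; lia.
- by rewrite ffunE.
- by rewrite ffunE.
Qed.

Lemma sum_bool (T : finType) (P : pred T) : (\sum_(x : T) (P x : nat) = #|P|)%N.
Proof. by rewrite -sum1_card [RHS]big_mkcond; apply: eq_bigr => x _; rewrite unfold_in; case: (P x). Qed.

Lemma card_cube d : #|cube d| = (2 ^ d)%N.
Proof. by rewrite card_ffun card_bool card_ord. Qed.

Section Count.
Variables (d : nat) (g : rel (cube d)).

Definition Rr (j : 'I_d) (u v : cube d) := g u v && lvl j u v.
Definition back (j : 'I_d) (v : cube d) : nat := (\sum_(u : cube d) Rr j u v)%N.

Lemma nedgesE (j : 'I_d) : nedges g j.+1 = (\sum_(v : cube d) back j v)%N.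
Proof.
rewrite /nedges -sum1_card big_mkcond /=.
rewrite (eq_bigr (fun p : cube d * cube d => (Rr j p.1 p.2 : nat))); last first.
  by move=> p _; rewrite /Rr -lvlE inE; case: (g p.1 p.2); case: (lexlt p.1 p.2); case: (delta p.1 p.2 == j.+1).
rewrite -(pair_big xpredT xpredT (fun u v => (Rr j u v : nat))) /=.
by rewrite exchange_big.
Qed.

Lemma back_le (j : 'I_d) v : (back j v <= 2 ^ (d - j - 1))%N.
Proof.
rewrite /back sum_bool.
have := @leq_card_in _ _ (proj j) (Rr j ^~ v).
rewrite card_ffun card_bool card_ord; apply.
move=> u u' Hu Hu'; move: Hu Hu'; rewrite /in_mem /= /Rr => /andP[_ Hu] /andP[_ Hu'] E; exact: (proj_inj Hu Hu' E).
Qed.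
End Count.

Section Quad.
Local Open Scope ring_scope.
Variables (R : realType) (I : finType) (L : {set I}) (p : I -> R) (lt : rel I).
Hypothesis p0 : forall i, 0 <= p i.
Hypothesis p1 : forall i, p i <= 1.
Hypothesis ltP : forall i j, i != j -> lt i j || lt j i.
Hypothesis lt_asym : forall i j, lt i j -> lt j i = false.
Hypothesis lt_irr : forall i, lt i i = false.

Lemma quad :
  (\sum_(i in L) p i) ^+ 2 - \sum_(i in L) p i <=
  2 * \sum_(i in L) \sum_(j in L | lt i j) p i * p j.
Proof.
have E : forall i, \sum_(j in L) p i * p j =
    \sum_(j in L) (if lt i j then p i * p j else 0)
  + \sum_(j in L) (if lt j i then p i * p j else 0)
  + \sum_(j in L) (if j == i then p i * p j else 0).
  move=> i; rewrite -!big_split /=; apply: eq_bigr => j _.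
  case: (eqVneq j i) => [->|h]; first by rewrite lt_irr !add0r.
  have := ltP h; case/orP => h'.
    by rewrite h' (lt_asym h') ?addr0 ?add0r.
  by rewrite h' (lt_asym h') ?addr0 ?add0r.
rewrite expr2 big_distrlr /= (eq_bigr _ (fun i _ => E i)) !big_split /=.
have -> : \sum_(i in L) \sum_(j in L) (if lt j i then p i * p j else 0) =
          \sum_(i in L) \sum_(j in L) (if lt i j then p i * p j else 0).
  rewrite exchange_big /=; apply: eq_bigr => i _; apply: eq_bigr => j _.
  by rewrite mulrC.
have D : \sum_(i in L) \sum_(j in L) (if j == i then p i * p j else 0)
          <= \sum_(i in L) p i.
  apply: ler_sum => i iL; rewrite (bigD1 i) //= eqxx big1 ?addr0.
    by rewrite ler_piMr.
  by move=> j /andP[_ /negPf ->].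
have -> : \sum_(i in L) \sum_(j in L | lt i j) p i * p j =
          \sum_(i in L) \sum_(j in L) (if lt i j then p i * p j else 0).
  by apply: eq_bigr => i _; rewrite big_mkcondr.
lra.
Qed.
End Quad.

Section Real.
Local Open Scope ring_scope.
Variables (R : realType) (d : nat) (g : rel (cube d)) (L : {set 'I_d}) (eta : R).

Definition Mi (i : 'I_d) : R := (2 ^ (d - i - 1))%:R.
Definition P (j : 'I_d) (v : cube d) : R := (back g j v)%:R / Mi j.
Definition Dd (i : 'I_d) (x : cube d) : R := \sum_(v : cube d) (Rr g i x v)%:R.
Definition S (i : 'I_d) (x : cube d) (j : 'I_d) : R :=
  \sum_(v : cube d) (Rr g i x v)%:R * P j v.
Definition cnt (i : 'I_d) (x : cube d) : nat :=
  #|[set j in L | (i < j)%N && (eta * Mi i / 2 <= S i x j)]|.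

Lemma Mi_gt0 i : 0 < Mi i.
Proof. by rewrite /Mi ltr0n expn_gt0. Qed.

Lemma P_ge0 j v : 0 <= P j v.
Proof. by rewrite /P divr_ge0 // ltW // Mi_gt0. Qed.

Lemma P_le1 j v : P j v <= 1.
Proof.
rewrite /P ler_pdivrMr ?Mi_gt0 // mul1r /Mi ler_nat; exact: back_le.
Qed.

Lemma S_le_D i x j : S i x j <= Dd i x.
Proof.
rewrite /S /Dd; apply: ler_sum => v _.
by rewrite ler_piMr ?ler0n ?P_le1.
Qed.

Lemma Dd_ge0 i x : 0 <= Dd i x.
Proof. by apply: sumr_ge0 => v _; rewrite ler0n. Qed.

Lemma S_ge0 i x j : 0 <= S i x j.
Proof. by apply: sumr_ge0 => v _; rewrite mulr_ge0 ?ler0n ?P_ge0. Qed.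

Lemma sumD i : \sum_(x : cube d) Dd i x / Mi i = \sum_(v : cube d) P i v.
Proof.
rewrite -mulr_suml /Dd exchange_big /= mulr_suml; apply: eq_bigr => v _.
by rewrite /P /back natr_sum.
Qed.

Lemma sumS i j :
  \sum_(x : cube d) S i x j / Mi i = \sum_(v : cube d) P i v * P j v.
Proof.
rewrite -mulr_suml /S exchange_big /= mulr_suml; apply: eq_bigr => v _.
by rewrite -mulr_suml /P /back !natr_sum mulrAC.
Qed.

Lemma cntE (i : 'I_d) (x : cube d) :
  (cnt i x)%:R = \sum_(j in L | (i < j)%N) (if eta * Mi i / 2 <= S i x j then 1 else 0 : R).
Proof.
rewrite /cnt -sum1_card natr_sum [LHS]big_mkcond [RHS]big_mkcond /=.
apply: eq_bigr => j _; rewrite !inE.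
by case: (j \in L); case: (i < j)%N; case: (_ <= _).
Qed.

Lemma cntD (i : 'I_d) (x : cube d) : 0 <= eta ->
  \sum_(j in L | (i < j)%N) (S i x j - eta * Mi i / 2) <= Dd i x * (cnt i x)%:R.
Proof.
move=> he; rewrite cntE mulr_sumr; apply: ler_sum => j _.
case: ifP => h.
- rewrite mulr1 lerBlDr (le_trans (S_le_D i x j)) // lerDl.
  by rewrite divr_ge0 // mulr_ge0 // ltW // Mi_gt0.
- by rewrite mulr0 subr_le0 ltW // ltNge h.
Qed.
Lemma main_avg (eps : R) :
  0 < eps -> eta = eps ^+ 2 / 12 -> 12 <= #|L|%:R * eps ->
  (forall i, i \in L -> eps * (2 ^ (d - 1))%:R <= \sum_(v : cube d) P i v) ->
  exists i x, [/\ i \in L, 0 < Dd i x & #|L|%:R * eps / 24 <= (cnt i x)%:R].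
Proof.
move=> he heta hk hL.
set k : R := #|L|%:R.
have [i0 i0L] : exists i, i \in L.
  apply/set0Pn; rewrite -card_gt0 lt0n; apply/eqP => E.
  by move: hk; rewrite /k E mul0r; lra.
have d0 : (0 < d)%N by apply: leq_ltn_trans (ltn_ord i0).
set N2 : R := (2 ^ (d - 1))%:R.
have N2gt0 : 0 < N2 by rewrite /N2 ltr0n expn_gt0.
set N : R := #|cube d|%:R.
have NE : N = 2 * N2.
  by rewrite /N /N2 card_cube -natrM -expnS subn1 prednK.
have eta0 : 0 <= eta by rewrite heta; apply: divr_ge0 => //; apply: sqr_ge0.
set t := k * eps.
set B := t / 24.
case: (boolP [exists i, [exists x, [&& i \in L, 0 < Dd i x & B <= (cnt i x)%:R]]]).
  case/existsP => i /existsP [x /and3P [h1 h2 h3]]; by exists i, x; split.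
rewrite negb_exists => /forallP H; exfalso.
set W := \sum_(i in L) \sum_(x : cube d) Dd i x / Mi i * (cnt i x)%:R.
set sig := \sum_(i in L) \sum_(v : cube d) P i v.
have Wup : W <= B * sig.
  rewrite /sig mulr_sumr; apply: ler_sum => i iL.
  rewrite -sumD mulr_sumr; apply: ler_sum => x _.
  have := H i; rewrite negb_exists => /forallP /(_ x).
  rewrite iL /= negb_and -real_ltNge ?num_real // -?real_ltNge ?num_real //.
  have Dg := Dd_ge0 i x.
  have Mg := Mi_gt0 i.
  case/orP => h.
    have -> : Dd i x = 0 by apply/eqP; rewrite eq_le Dg andbT leNgt.
    by rewrite !mul0r mulr0.
  rewrite [X in _ <= X]mulrC; apply: ler_wpM2l; last exact: ltW.
  by rewrite divr_ge0 // ltW.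
have Wlow : \sum_(i in L) \sum_(j in L | (i < j)%N)
    (\sum_(v : cube d) P i v * P j v - N * eta / 2) <= W.
  rewrite /W; apply: ler_sum => i iL.
  have Mg := Mi_gt0 i.
  have step : forall x, \sum_(j in L | (i < j)%N) (S i x j / Mi i - eta / 2)
      <= Dd i x / Mi i * (cnt i x)%:R.
    move=> x; have h := cntD i x eta0.
    have -> : \sum_(j in L | (i < j)%N) (S i x j / Mi i - eta / 2) =
        (\sum_(j in L | (i < j)%N) (S i x j - eta * Mi i / 2)) / Mi i.
      rewrite mulr_suml; apply: eq_bigr => j _; field.
      by rewrite lt0r_neq0.
    rewrite [X in _ <= X]mulrAC; apply: ler_wpM2r h.
    by rewrite invr_ge0 ltW.
  apply: le_trans (ler_sum _ (fun x _ => step x)).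
  rewrite exchange_big /=; apply: ler_sum => j _.
  rewrite sumrB sumS sumr_const /N.
  rewrite (@eq_card _ _ (cube d)) //.
  by rewrite -[eta / 2 *+ _]mulr_natr [eta / 2 * _]mulrC mulrA.
have c0 : 0 <= N * eta / 2 by rewrite divr_ge0 // mulr_ge0 // ler0n.
have Cb : \sum_(i in L) \sum_(j in L | (i < j)%N) (N * eta / 2) <= k * k * (N * eta / 2).
  apply: (@le_trans _ _ (\sum_(i in L) \sum_(j in L) (N * eta / 2))).
    apply: ler_sum => i _.
    rewrite [X in _ <= X](bigID (fun j : 'I_d => (i < j)%N)) /= lerDl.
    by apply: sumr_ge0.
  by rewrite !sumr_const -mulrnA -[_ *+ (#|L| * #|L|)]mulr_natl natrM.
have Qex : \sum_(i in L) \sum_(j in L | (i < j)%N) \sum_(v : cube d) P i v * P j v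
    = \sum_(v : cube d) \sum_(i in L) \sum_(j in L | (i < j)%N) P i v * P j v.
  rewrite [RHS]exchange_big /=; apply: eq_bigr => i _; exact: exchange_big.
set s := fun v : cube d => \sum_(i in L) P i v.
have quadv : forall v : cube d, s v ^+ 2 - s v <=
    2 * \sum_(i in L) \sum_(j in L | (i < j)%N) P i v * P j v.
  move=> v; apply: (quad L (p:=fun i => P i v) (lt:=fun i j : 'I_d => (i < j)%N)).
  - by move=> i; apply: P_ge0.
  - by move=> i; apply: P_le1.
  - by move=> i j; rewrite neq_ltn orbC.
  - by move=> i j /= h; apply/negbTE; rewrite -leqNgt ltnW.
  - by move=> i /=; rewrite ltnn.
have sq : forall v : cube d, t * s v - t ^+ 2 / 4 <= s v ^+ 2.
  move=> v; have h := sqr_ge0 (s v - t / 2); nra.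
have sigE : sig = \sum_(v : cube d) s v by rewrite /sig exchange_big.
have sigLow : t * N2 <= sig.
  apply: (@le_trans _ _ (\sum_(i in L) eps * N2)).
    by rewrite sumr_const -mulr_natl /t /k mulrA.
  by apply: ler_sum => i iL; apply: hL.
have Qlow : t * sig - N * (t ^+ 2 / 4) - sig <=
    2 * \sum_(v : cube d) \sum_(i in L) \sum_(j in L | (i < j)%N) P i v * P j v.
  rewrite sigE mulr_sumr.
  have -> : N * (t ^+ 2 / 4) = \sum_(v : cube d) t ^+ 2 / 4.
    by rewrite sumr_const (@eq_card _ _ (cube d)) // mulr_natl.
  rewrite -!sumrB mulr_sumr; apply: ler_sum => v _.
  by have := quadv v; have := sq v; lra.
have WE : \sum_(i in L) \sum_(j in L | (i < j)%N)
    (\sum_(v : cube d) P i v * P j v - N * eta / 2) =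
  \sum_(i in L) \sum_(j in L | (i < j)%N) \sum_(v : cube d) P i v * P j v -
  \sum_(i in L) \sum_(j in L | (i < j)%N) (N * eta / 2).
  by rewrite -sumrB; apply: eq_bigr => i _; rewrite sumrB.
rewrite WE Qex in Wlow.
have KE : k * k * (N * eta / 2) = t ^+ 2 * N2 / 12 by rewrite NE heta /t; field.
rewrite KE in Cb.
rewrite NE in Qlow.
set Q := \sum_(v : cube d) _ in Wlow Qlow.
have ht : 12 <= t by [].
have h1 : 0 <= (11 * t - 12) * (sig - t * N2) by apply: mulr_ge0; lra.
have h2 : 0 < t * N2 * (t - 4) by apply: mulr_gt0; [apply: mulr_gt0|]; lra.
rewrite /B in Wup.
nra.
Qed.
End Real.

Definition gp d (g : rel (cube d)) (i : nat) (x : cube d) : rel (cube (d - i - 1)) :=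
  fun u w => g (rhs_emb i x u) (rhs_emb i x w) &&
    ((lexlt (rhs_emb i x u) (rhs_emb i x w) && fwd_nbr g x (rhs_emb i x w)) ||
     (lexlt (rhs_emb i x w) (rhs_emb i x u) && fwd_nbr g x (rhs_emb i x u))).

Arguments gp {d} g i x.
Lemma key d (g : rel (cube d)) (i : 'I_d) (x : cube d) (k : 'I_(d - i - 1)) :
  (\sum_(v : cube d) Rr g i x v * back g (sh k) v <= nedges (gp g i x) k.+1)%N.
Proof.
set j := sh k.
have ij : (i < j)%N by rewrite /=; lia.
have -> : (\sum_(v : cube d) Rr g i x v * back g j v =
    #|[pred p : cube d * cube d | Rr g i x p.1 && Rr g j p.2 p.1]|)%N.
  rewrite -sum_bool -(pair_big xpredT xpredT (fun v u => (Rr g i x v && Rr g j u v : nat))) /=.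
  apply: eq_bigr => v _; rewrite /back big_distrr /=; apply: eq_bigr => u _.
  by rewrite mulnb.
set A := [pred p : cube d * cube d | Rr g i x p.1 && Rr g j p.2 p.1].
set f := fun p : cube d * cube d => (proj i p.2, proj i p.1).
have embv : forall p, p \in A -> rhs_emb i x (proj i p.1) = p.1 /\ rhs_emb i x (proj i p.2) = p.2.
  case=> v u; rewrite unfold_in /= /Rr => /andP[/andP[_ Hv] /andP[_ Hu]].
  move: (Hv) (Hu) => /andP[/andP[/forallP Hv1 Hv2] Hv3] /andP[/andP[/forallP Hu1 Hu2] Hu3].
  have vx : forall t : 'I_d, (t < i)%N -> v t = x t.
    by move=> t ht; apply/esym/eqP; exact: (implyP (Hv1 t) ht).
  have uv : forall t : 'I_d, (t < j)%N -> u t = v t.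
    by move=> t ht; apply/eqP; exact: (implyP (Hu1 t) ht).
  split; first exact: emb_proj.
  apply: emb_proj.
    by move=> t ht; rewrite uv ?vx //; apply: ltn_trans ij.
  by rewrite uv.
have finj : {in A &, injective f}.
  move=> [v u] [v' u'] pA qA [E2 E1].
  have [p1 p2] := embv _ pA; have [q1 q2] := embv _ qA.
  simpl in p1, p2, q1, q2.
  by rewrite -p1 -p2 -q1 -q2 E1 E2.
rewrite -(card_in_imset finj) /nedges; apply: subset_leq_card.
apply/subsetP => q /imsetP [p pA ->]; rewrite inE /=.
have [p1 p2] := embv p pA.
move: pA; rewrite unfold_in /= /Rr => /andP[/andP[gxv Hv] /andP[guv Hu]].
rewrite lvlE (lvl_proj Hu) andbT /gp p1 p2 guv (lvl_lexlt Hu) /fwd_nbr (lvl_lexlt Hv) gxv.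
by [].
Qed.

Lemma tau_split (d i : nat) : (i < d)%N ->
  tau i.+1 d = (2 ^ (d - 1) * 2 ^ (d - i - 1))%N.
Proof. move=> h; rewrite /tau -expnD; congr (2 ^ _); lia. Qed.

Lemma tau_split2 (d i j : nat) (k : nat) : (k < d - i - 1)%N -> j = (k + i.+1)%N ->
  (tau k.+1 (d - i - 1) * 2 = 2 ^ (d - j - 1) * 2 ^ (d - i - 1))%N.
Proof. move=> h ->; rewrite /tau -expnSr -expnD; congr (2 ^ _); lia. Qed.

Local Open Scope ring_scope.

Theorem lemma4p3 (R : realType) (eps : R) :
  0 < eps ->
  exists2 eta : R, 0 < eta &
  forall (C : R), 12 / eps <= C ->
  forall (d : nat) (g : rel (cube d)),
    is_graph g -> rich eps C g ->
    exists (a : nat) (x : cube d) (g' : rel (cube (d - a - 1))),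
      [/\ (a < d)%N,
          (forall i : 'I_d, i = a :> nat -> x i = false),
          is_graph g' /\
          (forall u v, g' u v -> g (rhs_emb a x u) (rhs_emb a x v)),
          rich eta (eps * C / 24) g' &
          (forall u v, g' u v -> lexlt (rhs_emb a x u) (rhs_emb a x v) ->
             fwd_nbr g x (rhs_emb a x v))].
Proof.
move=> he; set eta := eps ^+ 2 / 12.
have eta_gt0 : 0 < eta by rewrite /eta divr_gt0 // exprn_gt0.
exists eta => // C hC d g gG grich.
set L := [set l : 'I_d | rich_level eps g l.+1].
have Ck : C <= #|L|%:R := grich.
have hk : 12 <= #|L|%:R * eps.
  have : 12 <= C * eps by rewrite -ler_pdivrMr.
  move=> h; apply: le_trans h _; by rewrite ler_pM2r.
have hL : forall i, i \in L -> eps * (2 ^ (d - 1))%:R <= \sum_(v : cube d) P R g i v.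
  move=> i; rewrite inE /rich_level => hi.
  have -> : \sum_(v : cube d) P R g i v = (nedges g i.+1)%:R / Mi R i.
    by rewrite /P -mulr_suml -natr_sum -nedgesE.
  rewrite ler_pdivlMr ?Mi_gt0 //; apply: le_trans hi.
  by rewrite tau_split // natrM mulrA.
have [i [x [iL Dpos cntB]]] := @main_avg R d g L eta eps he erefl hk hL.
have [v Hv] : exists v, Rr g i x v.
  case: (boolP [exists v, Rr g i x v]) => [/existsP[v Hv] | /existsPn H]; first by exists v.
  by move: Dpos; rewrite /Dd big1 ?ltxx // => v _; rewrite (negbTE (H v)).
have xi : x i = false.
  by move: Hv => /andP[_ /andP[/andP[_ h] _]]; apply/negbTE.
exists (nat_of_ord i), x, (gp g i x); split.
- exact: ltn_ord.
- by move=> t ht; have -> : t = i by apply: val_inj.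
- split; last by move=> u w /andP[].
  split.
  + move=> u w; rewrite /gp (proj1 gG) orbC; by [].
  + by move=> u; rewrite /gp (negbTE ((proj2 gG) _)).
- rewrite /rich.
  apply: (@le_trans _ _ (cnt g L eta i x)%:R).
    have : eps * C <= #|L|%:R * eps by rewrite mulrC ler_pM2r.
    move: cntB; lra.
  rewrite ler_nat /cnt.
  apply: leq_trans (subset_leq_card _) (leq_imset_card (@sh d i) _).
  apply/subsetP => j; rewrite inE => /andP[jL /andP[ij hS]].
  have [kk Ek] := shP ij.
  apply/imsetP; exists kk; last by rewrite Ek.
  rewrite inE /rich_level.
  have K := @key d g i x kk; rewrite Ek in K.
  have SE : S R g i x j = (\sum_(v : cube d) Rr g i x v * back g j v)%:R / Mi R j.
    rewrite /S /P natr_sum mulr_suml; apply: eq_bigr => w _; by rewrite natrM mulrA.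
  have TE := @tau_split2 d i j kk (ltn_ord kk) (esym (congr1 val Ek)).
  have TT : ((tau kk.+1 (d - i - 1))%:R : R) = Mi R j * Mi R i / 2.
    by rewrite /Mi -natrM -TE natrM mulfK // pnatr_eq0.
  rewrite TT; rewrite SE ler_pdivlMr ?Mi_gt0 // in hS.
  apply: le_trans (_ : _ <= (\sum_(v : cube d) Rr g i x v * back g j v)%:R) _; last by rewrite ler_nat.
  apply: le_trans hS; lra.
- move=> u w /andP[_ /orP[/andP[_ h] | /andP[h _]]] hl //.
  by exfalso; exact: lexlt_asym hl h.
Qed.
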